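(* Let $G=(V,E)$ be a connected simple graph with a set-valued metric $\Omega(-,-)$. Then $d_G(x,y)\ge|\Omega(x,y)|$ for all $x,y\in V$, where $d_G$ is the graph distance.
   Context: For a connected simple graph $G=(V,E)$ and a set $\Omega$, a set-valued metric on $G$ is a function $\Omega(-,-):V\times V\to 2^{\Omega}$ such that $\Omega(x,y)=\Omega(y,x)$ for all $x,y$; $|\Omega(x,y)|=1$ whenever $\{x,y\}\in E$; and $\Omega(x,z)=\Omega(x,y)\triangle\Omega(y,z)$ for all $x,y,z$, where $\triangle$ is symmetric difference. *)

(* Defs.v *)
From mathcomp Require Import all_boot.
From Stdlib Require List.
Set Implicit Arguments. Unset Strict Implicit. Unset Printing Implicit Defensive.

Definition simple_graph (T : finType) (e : rel T) : Prop :=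
  symmetric e /\ irreflexive e.

Definition connected_graph (T : finType) (e : rel T) : Prop :=
  forall x y : T, connect e x y.

(* Subsets of the set Omega (here a type W) are predicates W -> Prop. *)
Definition subsetW (W : Type) := W -> Prop.

Definition has_card (W : Type) (A : subsetW W) (n : nat) : Prop :=
  exists s : list W, List.NoDup s /\ (forall w, A w <-> List.In w s) /\ List.length s = n.

Definition symdiff (W : Type) (A B : subsetW W) : subsetW W :=
  fun w => (A w /\ ~ B w) \/ (B w /\ ~ A w).

Definition set_valued_metric (T : finType) (e : rel T) (W : Type)
  (Om : T -> T -> subsetW W) : Prop :=
  (forall x y w, Om x y w <-> Om y x w) /\
  (forall x y, e x y -> has_card (Om x y) 1) /\
  (forall x y z w, Om x z w <-> symdiff (Om x y) (Om y z) w).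

Definition walk_of_length (T : finType) (e : rel T) (x y : T) (n : nat) : bool :=
  [exists p : n.-tuple T, path e x p && (last x p == y)].

Lemma walk_exists (T : finType) (e : rel T) (x y : T) :
  connect e x y -> exists n, walk_of_length e x y n.
Proof.
move=> /connectP [p pp ->]; exists (size p).
by apply/existsP; exists (in_tuple p); rewrite /= pp eqxx.
Qed.

Definition gdist (T : finType) (e : rel T) (x y : T) (h : connect e x y) : nat :=
  ex_minn (walk_exists h).

(* Main.v *)
Require Import Defs.
From mathcomp Require Import all_boot.
From Stdlib Require Import Classical List.

Lemma has_card_ext (W : Type) (A B : subsetW W) n :
  (forall w, A w <-> B w) -> has_card A n -> has_card B n.
Proof.
move=> H [s [nd [hs hl]]]; exists s; split=> //; split=> // w.
by rewrite -H.
Qed.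

Lemma symdiff_card (W : Type) (A B : subsetW W) n :
  has_card B 1 -> has_card A n ->
  exists m, has_card (symdiff B A) m /\ m <= n.+1.
Proof.
move=> [[|a [|b t]] [nd1 [h1 l1]]] //= [s [nd [hs hl]]].
have Ba : forall w, B w <-> w = a.
  move=> w; rewrite h1 /=; split; [by case|by left].
destruct (classic (List.In a s)) as [Ia|Na].
- destruct (in_split a s Ia) as [s1 [s2 E]]; subst s.
  exists (length (s1 ++ s2)); split; last first.
    rewrite length_app /= in hl; rewrite length_app -hl.
    apply/leP; apply: le_S; apply PeanoNat.Nat.add_le_mono_l; exact: le_S.
  exists (s1 ++ s2); split; first exact: (NoDup_remove_1 _ _ _ nd).
  split=> //.
  have Nin := NoDup_remove_2 _ _ _ nd.
  move=> w; rewrite /symdiff Ba hs; split.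
  + case=> [[-> H]|[H1 H2]]; first by exfalso; apply: H; apply: in_elt.
    apply in_app_or in H1; apply in_or_app; case: H1 => /=; [by left|].
    by case=> [E|]; [exfalso; apply: H2|right].
  + move=> H; right; split; last by move=> E; subst w.
    apply in_app_or in H; apply in_or_app; case: H; [by left| by move=> ?; right; right].
- exists (length (a :: s)); split; last by rewrite /= hl.
  exists (a :: s); split; first by constructor.
  split=> // w; rewrite /symdiff Ba hs /=; split.
  + case=> [[-> _]|[H _]]; [by left|by right].
  + case=> [<-|H]; [by left|right; split=> // E; subst w].
  exact: Na H.
Qed.

Lemma walk_bound (T : finType) (e : rel T) (W : Type) (Om : T -> T -> subsetW W) :
  set_valued_metric e Om ->
  forall p x, path e x p -> exists m, has_card (Om x (seq.last x p)) m /\ m <= size p.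
Proof.
move=> [_ [h1 htri]]; elim=> [|z p IH] x /=.
- move=> _; exists 0; split=> //; exists nil; split; first constructor.
  split=> // w; rewrite (htri x x x) /symdiff /=; split; last by [].
  by case=> [[H1 H2]|[H1 H2]].
- move=> /andP [exz pp]; have [m [hm le]] := IH z pp.
  have [m' [hm' le']] := @symdiff_card _ _ _ _ (h1 _ _ exz) hm.
  exists m'; split; last by apply: leq_trans le' _.
  apply: has_card_ext hm' => w; by rewrite (htri x z).
Qed.

Theorem proposition3p5 (T : finType) (e : rel T) (W : Type)
  (Om : T -> T -> subsetW W) (hs : simple_graph e) (hc : connected_graph e) :
  set_valued_metric e Om ->
  forall x y : T, exists n : nat, has_card (Om x y) n /\ n <= gdist (hc x y).
Proof.
move=> hm x y; rewrite /gdist.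
case: ex_minnP => n /existsP [p /andP [pp /eqP hl]] _.
have [m [hc' le]] := @walk_bound _ _ _ _ hm _ _ pp.
exists m; split; first by rewrite -hl.
by rewrite size_tuple in le.
Qed.
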